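(* Fix a horizon $T$ (an even positive integer), a number of experts $n\ge 2$, and an error constant $\Delta\in(0,1]$. Then there exist a prompt $x$, a finite vocabulary $\mathcal{Y}$, deterministic expert policies $\pi_1,\dots,\pi_n$, and a family $\mathcal{R}$ of token-level reward functions $r$ with values in $[0,1]$ (all on the same deterministic token-level MDP described in the context) such that: (i) for every $r\in\mathcal{R}$, with $\pi^*$ a deterministic optimal policy for $r$, the following three properties hold: 1. (Existence of a near-optimal path) there exist $\varepsilon\in[0,1]$ with $\varepsilon\le\Delta$ and a routing sequence $P^*=(n_1^*,\dots,n_T^* )\in[n]^T$ such that $V^{\pi^*}(x)=V^{P^*}+\varepsilon$; 2. (Single policy coverage) for every $t\in\{0,\dots,T-1\}$, letting $y_{\le t}$ be the prefix generated by $\pi^*$ from $x$, $\Big|\max_{i\in[n]} Q^{\pi^*}\big(x,y_{\le t},\pi_i(x,y_{\le t})\big)-Q^{\pi^*}\big(x,y_{\le t},\pi^*(x,y_{\le t})\big)\Big|\le\Delta;$ 3. (Generalization coverage) for every prefix $(x,y_{\le t})$ with $t<T$ such that some full response $(x,y_{\le T})$ extending it satisfies $R(x,y_{\le T})\ge V^{\pi^*}(x)-\Delta$, the same inequality $\Big|\max_{i\in[n]} Q^{\pi^*}\big(x,y_{\le t},\pi_i(x,y_{\le t})\big)-Q^{\pi^*}\big(x,y_{\le t},\pi^*(x,y_{\le t})\big)\Big|\le\Delta$ holds; (ii) for every token-level routing algorithm $\mathcal{A}:\mathcal{O}\to[n]$ (with observations as defined in the context), there exists $r\in\mathcal{R}$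 such that $V^{\pi_{\mathcal{A}}}(x) < V^{\pi^*}(x)-T/2+2$, i.e. no such algorithm achieves $V^{\pi_{\mathcal{A}}}\ge V^{\pi^*}-T/2+2$ for all rewards in the family.
   Context: Token-level MDP for decoding: a prompt $x$, vocabulary $\mathcal{Y}$, states are prefixes $(x,y_{\le t})=(x,y_1,\dots,y_t)$, an action is the next token $y_{t+1}\in\mathcal{Y}$, transitions are deterministic: $(x,y_{\le t})\mapsto(x,y_{\le t},y_{t+1})$, responses have fixed length $T$. A reward function assigns $r(x,y_{\le t+1})\in[0,1]$ to each prefix; the total reward of a prefix is $R(x,y_{\le t})=\sum_{i=1}^t r(x,y_{\le i})$. For a deterministic policy $\pi$ (a map from prefixes to next tokens, written $\pi(x,y_{\le t})$), $V^{\pi}(x,y_{\le t})=\sum_{i=t+1}^T r(x,y_{\le i})$ along the continuation generated by $\pi$, and $Q^{\pi}(x,y_{\le t},y_{t+1})=r(x,y_{\le t+1})+V^{\pi}(x,y_{\le t+1})$; we also write $Q^{\pi}(x,y_{\le t+1})$ for $Q^{\pi}(x,y_{\le t},y_{t+1})$. $\pi^*$ is an optimal policy (maximizing $V$ from every state), $V^*=V^{\pi^*}$. Expert policies $\pi_1,\dots,\pi_n$ are deterministic. A routing sequence $P=(n_1,\dots,n_T)\in[n]^T$ generates the response $y_k=\pi_{n_k}(x,y_{\le k-1})$, and $V^{P}=R(x,y_{\le T})$ for that response. A token-level routing algorithm $\mathcal{A}:\mathcal{O}\to[n]$ works as follows: at each step $t=0,\dots,T-1$, at the currently visited prefix $(x,y_{\le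 t})$ it receives the observation $o_t=\{x,\ y_{\le t},\ \{Q^{\pi^*}(x,y_{\le k})\}_{k=1}^t,\ \{Q^{\pi^*}(x,y_{\le t},y)\}_{y\in\mathcal{Y}}\}$, outputs an expert index $n_{t+1}=\mathcal{A}(o_t)$, and the next token is $y_{t+1}=\pi_{n_{t+1}}(x,y_{\le t})$; $\mathcal{O}$ is the union over $t$ of the possible observations, and $\pi_{\mathcal{A}}$ is the resulting decoding policy with value $V^{\pi_{\mathcal{A}}}(x)=R(x,y_{\le T})$ for the generated response. *)

(* Defs.v *)
From mathcomp Require Import all_boot all_order all_algebra.
Set Implicit Arguments. Unset Strict Implicit. Unset Printing Implicit Defensive.
Import Order.TTheory GRing.Theory Num.Theory.
Local Open Scope ring_scope.

Section TokenMDP.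
Variables (R : realFieldType) (X : Type) (Y : Type).

(* prompts have type X, tokens type Y; a state is (x, ys) with ys = y_{<=t} *)
Definition policy := X -> seq Y -> Y.
Definition reward := X -> seq Y -> R.

Definition step (pi : policy) (x : X) (ys : seq Y) : seq Y := rcons ys (pi x ys).
Definition cont (pi : policy) (x : X) (ys : seq Y) (k : nat) : seq Y :=
  iter k (step pi x) ys.

Definition totR (r : reward) (x : X) (ys : seq Y) : R :=
  \sum_(i < size ys) r x (take i.+1 ys).

Definition V (T : nat) (r : reward) (pi : policy) (x : X) (ys : seq Y) : R :=
  let zs := cont pi x ys (T - size ys) in
  \sum_(size ys <= i < T) r x (take i.+1 zs).

Definition Qs (T : nat) (r : reward) (pi : policy) (x : X) (ys : seq Y) : R :=
  r x ys + V T r pi x ys.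
Definition Q (T : nat) (r : reward) (pi : policy) (x : X) (ys : seq Y) (y : Y) : R :=
  Qs T r pi x (rcons ys y).

Definition optimal (T : nat) (r : reward) (pistar : policy) : Prop :=
  forall (pi : policy) (x : X) (ys : seq Y), V T r pi x ys <= V T r pistar x ys.

Definition route_resp (n : nat) (pis : 'I_n -> policy) (x : X) (P : seq 'I_n) : seq Y :=
  foldl (fun ys i => rcons ys (pis i x ys)) [::] P.
Definition VP (r : reward) (n : nat) (pis : 'I_n -> policy) (x : X) (P : seq 'I_n) : R :=
  totR r x (route_resp pis x P).

Record obs := Obs {
  o_prompt : X;
  o_prefix : seq Y;
  o_qhist : seq R;
  o_qnext : Y -> R }.

Definition observe (T : nat) (r : reward) (pistar : policy) (x : X) (ys : seq Y) : obs :=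
  Obs x ys [seq Qs T r pistar x (take k ys) | k <- iota 1 (size ys)]
      (fun y => Q T r pistar x ys y).

Definition alg_policy (n : nat) (pis : 'I_n -> policy) (A : obs -> 'I_n)
  (T : nat) (r : reward) (pistar : policy) : policy :=
  fun x ys => pis (A (observe T r pistar x ys)) x ys.

(* maximum of a nonempty list (0 for the empty list, never used here) *)
Definition seqmax (s : seq R) : R :=
  if s is a :: s' then foldr Num.max a s' else 0.
Definition maxI (n : nat) (F : 'I_n -> R) : R := seqmax [seq F i | i <- enum 'I_n].

Definition cov_gap (T : nat) (r : reward) (pistar : policy) (n : nat)
  (pis : 'I_n -> policy) (x : X) (ys : seq Y) : R :=
  `| maxI (fun i => Q T r pistar x ys (pis i x ys)) - Q T r pistar x ys (pistar x ys) |.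

End TokenMDP.

(* Main.v *)
Require Import Defs.
From mathcomp Require Import all_boot all_order all_algebra.
From mathcomp Require Import lra zify.
From Stdlib Require Import FunctionalExtensionality.
Import Order.TTheory GRing.Theory Num.Theory.
Local Open Scope ring_scope.

Lemma cont0 {X Y : Type} (pi : policy X Y) x ys : cont pi x ys 0 = ys.
Proof. by []. Qed.

Lemma contSr {X Y : Type} (pi : policy X Y) x ys k :
  cont pi x ys k.+1 = cont pi x (rcons ys (pi x ys)) k.
Proof. by rewrite /cont iterSr. Qed.

Lemma contD {X Y : Type} (pi : policy X Y) x ys a b :
  cont pi x ys (a + b) = cont pi x (cont pi x ys a) b.
Proof. by rewrite /cont addnC iterD. Qed.

Lemma cont_ext {X Y : Type} (pi : policy X Y) x ys k :
  exists s, cont pi x ys k = ys ++ s /\ size s = k.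
Proof.
elim: k ys => [|k IH] ys; first by exists [::]; rewrite cats0.
rewrite contSr; case: (IH (rcons ys (pi x ys))) => s [-> hs].
by exists (pi x ys :: s); rewrite cat_rcons /= hs.
Qed.

Lemma size_cont {X Y : Type} (pi : policy X Y) x ys k :
  size (cont pi x ys k) = (size ys + k)%N.
Proof. by case: (cont_ext pi x ys k) => s [-> <-]; rewrite size_cat. Qed.

Lemma take_cont {X Y : Type} (pi : policy X Y) x ys j k : (j <= k)%N ->
  take (size ys + j) (cont pi x ys k) = cont pi x ys j.
Proof.
move=> hjk; rewrite -(subnKC hjk) contD.
case: (cont_ext pi x (cont pi x ys j) (k - j)) => s [-> _].
by rewrite -(size_cont pi x ys j) take_size_cat.
Qed.

Lemma bellman {R : realFieldType} {X Y : Type} T (r : reward R X Y) (pi : policy X Y) x ys :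
  (size ys < T)%N ->
  V T r pi x ys = r x (rcons ys (pi x ys)) + V T r pi x (rcons ys (pi x ys)).
Proof.
move=> hT; rewrite /V size_rcons.
have -> : (T - size ys = (T - (size ys).+1).+1)%N by rewrite subnSK.
rewrite big_ltn // contSr; congr (_ + _).
have := take_cont pi x (rcons ys (pi x ys)) 0 (T - (size ys).+1) (leq0n _).
by rewrite addn0 size_rcons => ->.
Qed.

Lemma foldr_max_ge {R : realFieldType} (a y : R) (s : seq R) :
  y \in a :: s -> y <= foldr Num.max a s.
Proof.
elim: s y => [|b s IH] y; first by rewrite inE => /eqP ->.
rewrite /= !inE => /orP[/eqP ->|/orP[/eqP ->|hy]].
- by rewrite le_max IH ?inE ?eqxx ?orbT.
- by rewrite le_max lexx.
- by rewrite le_max IH ?inE ?hy ?orbT.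
Qed.

Lemma foldr_max_le {R : realFieldType} (a h : R) (s : seq R) :
  a <= h -> all (fun z => z <= h) s -> foldr Num.max a s <= h.
Proof.
move=> ha; elim: s => [|b s IH] //= /andP[hb hs].
by rewrite ge_max hb IH.
Qed.

Lemma maxI_bounds {R : realFieldType} n (F : 'I_n -> R) (i0 : 'I_n) lo hi :
  lo <= F i0 -> (forall i, F i <= hi) -> lo <= maxI F <= hi.
Proof.
move=> hlo hhi; rewrite /maxI.
have : F i0 \in [seq F i | i <- enum 'I_n] by apply: map_f; rewrite mem_enum.
case E: [seq F i | i <- enum 'I_n] => [//|a s] hin /=.
apply/andP; split.
  have h := foldr_max_ge _ _ _ hin. exact: le_trans hlo h.
have hall : all (fun z => z <= hi) (a :: s).
  by rewrite -E; apply/allP => z /mapP [i _ ->].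
by case/andP: hall => ha hs; apply: foldr_max_le.
Qed.
Definition rk {R : realFieldType} (Delta : R) (k : option bool) : reward R unit (option bool) :=
  fun _ s => if (size s <= 1)%N then 0 else if head None s != k then 1
    else if last None s == None then 1
    else if [&& (3 < size s)%N, nth None s 1 != None & nth None s 2 != None] then 0
    else 1 - Delta.

Definition W (R : realFieldType) (T t : nat) : R := \sum_(t <= i < T) (i != 0)%N%:R.

Lemma rk_ge0 {R : realFieldType} (Delta : R) k x s : Delta <= 1 -> 0 <= rk Delta k x s.
Proof. move=> hD; rewrite /rk; repeat case: ifP => _ //; by rewrite subr_ge0. Qed.

Lemma rk_le {R : realFieldType} (Delta : R) k x s : 0 <= Delta ->
  rk Delta k x s <= (1 < size s)%N%:R.
Proof.
move=> hD; rewrite /rk leqNgt; case: (1 < size s)%N => //=.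
repeat case: ifP => _ //=; lra.
Qed.

Lemma rk_last {R : realFieldType} (Delta : R) k x s :
  (1 < size s)%N -> last None s = None -> rk Delta k x s = 1.
Proof. by rewrite /rk => h1 ->; rewrite leqNgt h1 /=; case: ifP. Qed.

Lemma V_le {R : realFieldType} (Delta : R) k T (pi : policy unit (option bool)) x ys :
  0 <= Delta -> V T (rk Delta k) pi x ys <= W R T (size ys).
Proof.
move=> hD; rewrite /V /W; apply: ler_sum => i _.
apply: le_trans (rk_le _ _ _ _ hD) _.
case: i => [|i] //=; last by rewrite ler_nat leq_b1.
by rewrite size_take_min ltnNge geq_minl.
Qed.

Definition pic : policy unit (option bool) := fun _ _ => None.

Lemma last_nseqS {T : Type} (x y : T) m : last y (nseq m.+1 x) = x.
Proof. by elim: m y => //= m IH y; rewrite IH. Qed.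

Lemma cont_pic x ys m : cont pic x ys m = ys ++ nseq m None.
Proof.
elim: m ys => [|m IH] ys; first by rewrite cats0.
by rewrite contSr IH cat_rcons.
Qed.

Lemma V_pic {R : realFieldType} (Delta : R) k T x ys :
  V T (rk Delta k) pic x ys = W R T (size ys).
Proof.
rewrite /V /W big_nat_cond [RHS]big_nat_cond; apply: eq_bigr => i /andP[/andP[h1 h2] _].
rewrite cont_pic take_cat ltnNge (leq_trans h1 (leqnSn _)) /= take_nseq.
case: i h1 h2 => [|i] h1 h2.
  by rewrite /rk size_cat size_nseq; case: (ys) h1 => //=.
rewrite rk_last //.
  by rewrite size_cat size_nseq; lia.
  rewrite last_cat (_ : (i.+2 - size ys = (i.+1 - size ys).+1)%N); last by lia.
  by rewrite last_nseqS.
by lia.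
Qed.

Lemma opt_pic {R : realFieldType} (Delta : R) k T : 0 <= Delta ->
  optimal T (rk Delta k) pic.
Proof. by move=> hD pi x ys; rewrite V_pic; apply: V_le. Qed.

Lemma opt_V {R : realFieldType} (Delta : R) k T ps x ys : 0 <= Delta ->
  optimal T (rk Delta k) ps -> V T (rk Delta k) ps x ys = W R T (size ys).
Proof.
move=> hD hopt; apply/le_anti; rewrite V_le //=.
by rewrite -(V_pic Delta k T x ys); apply: hopt.
Qed.

Lemma W_split {R : realFieldType} T t : (t < T)%N -> W R T t = (t != 0)%N%:R + W R T t.+1.
Proof. by move=> h; rewrite /W big_ltn. Qed.

Lemma Q_opt {R : realFieldType} (Delta : R) k T ps x ys y : 0 <= Delta ->
  optimal T (rk Delta k) ps ->
  Q T (rk Delta k) ps x ys y = rk Delta k x (rcons ys y) + W R T (size ys).+1.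
Proof. by move=> hD hopt; rewrite /Q /Qs (opt_V _ _ _ _ _ _ hD hopt) size_rcons. Qed.

Lemma Q_optpi {R : realFieldType} (Delta : R) k T ps x ys : 0 <= Delta ->
  optimal T (rk Delta k) ps -> (size ys < T)%N ->
  Q T (rk Delta k) ps x ys (ps x ys) = W R T (size ys).
Proof.
move=> hD hopt hT; rewrite /Q /Qs -bellman //.
exact: opt_V.
Qed.

Definition bad (k : option bool) (ys : seq (option bool)) :=
  [&& (3 <= size ys)%N, head None ys == k, nth None ys 1 != None & nth None ys 2 != None].

Lemma rk_good {R : realFieldType} (Delta : R) k x ys b : 0 <= Delta -> ~~ bad k ys ->
  (size ys != 0)%N%:R - Delta <= rk Delta k x (rcons ys (Some b)).
Proof.
move=> hD; case: ys => [|a l] /=; first by rewrite /rk /=; lra.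
rewrite /rk /= size_rcons /= last_rcons /bad /=.
case: (a =P k) => [_|_] /=; last by lra.
case: l => [|b1 [|b2 l]] /=; try lra.
by case: ifP => //; lra.
Qed.

Definition pisE {n} (i : 'I_n) : policy unit (option bool) := fun _ _ => Some (val i == 0%N).

Lemma cov {R : realFieldType} (Delta : R) k T ps n (i0 : 'I_n) x ys :
  0 < Delta -> optimal T (rk Delta k) ps -> (size ys < T)%N -> ~~ bad k ys ->
  cov_gap T (rk Delta k) ps (@pisE n) x ys <= Delta.
Proof.
move=> hD hopt hT hb; have hD0 := ltW hD.
rewrite /cov_gap (Q_optpi _ _ _ _ _ _ hD0 hopt hT).
have := @maxI_bounds R n (fun i => Q T (rk Delta k) ps x ys (pisE i x ys)) i0
  (W R T (size ys) - Delta) (W R T (size ys)).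
case/(_ _ _)/andP.
- rewrite Q_opt // (W_split (R:=R) _ _ hT).
  have := rk_good Delta k x ys (val i0 == 0%N) hD0 hb; lra.
- move=> i; rewrite Q_opt // (W_split (R:=R) _ _ hT).
  have := rk_le Delta k x (rcons ys (pisE i x ys)) hD0.
  rewrite size_rcons ltnS lt0n; lra.
move=> h1 h2; rewrite ler_norml; apply/andP; split; lra.
Qed.

Lemma sum3 {R : realFieldType} m :
  \sum_(0 <= i < m.+3) ((i == 1%N) || (i == 2%N))%N%:R = 2 :> R.
Proof.
by rewrite !big_nat_recl //= big1 ?addr0 ?add0r.
Qed.

Lemma bad_tot {R : realFieldType} (Delta : R) k x T ys zs :
  0 <= Delta <= 1 -> bad k ys -> size zs = T -> take (size ys) zs = ys ->
  totR (rk Delta k) x zs <= W R T 0 - Delta * 2.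
Proof.
case/andP=> hD0 hD1 hb hsz hys.
have hyT : (size ys <= T)%N by rewrite -hys size_take_min -hsz geq_minr.
case/and4P: (hb) => h3 hk h1 h2.
have [m hm] : exists m, T = m.+3 by exists (T - 3)%N; lia.
rewrite /totR -(big_mkord xpredT (fun i => rk Delta k x (take i.+1 zs))) hsz.
apply: (@le_trans _ _ (\sum_(0 <= i < T) ((i != 0%N)%:R - Delta * ((i == 1%N) || (i == 2%N))%N%:R))).
  rewrite big_nat_cond [X in _ <= X]big_nat_cond; apply: ler_sum => i /andP[/andP[_ hi] _].
  case hi12: ((i == 1%N) || (i == 2%N)).
    have e : take i.+1 zs = take i.+1 ys.
      by rewrite -hys take_takel //; case/orP: hi12 => /eqP ->; lia.
    rewrite e; clear hyT; case: ys hys hb h3 hk h1 h2 e => [|y0 [|y1 [|y2 l]]] //= _ _ _ /eqP hk h1 h2 _.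
    case/orP: hi12 => /eqP -> /=; rewrite /rk /= hk eqxx /= (negbTE h1) ?take0 /= ?(negbTE h2) /= ?mulr1; lra.
  rewrite mulr0 subr0; apply: le_trans (rk_le _ _ _ _ hD0) _.
  case: i {hi hi12} => [|i] //=; last by rewrite ler_nat leq_b1.
  by rewrite size_take_min ltnNge geq_minl.
rewrite sumrB -mulr_sumr hm sum3 -hm; exact: lexx.
Qed.

Lemma route_nseq {n} (j : 'I_n) x ys m :
  foldl (fun ys i => rcons ys (pisE i x ys)) ys (nseq m j) = ys ++ nseq m (Some (val j == 0%N)).
Proof.
elim: m ys => [|m IH] ys /=; first by rewrite cats0.
by rewrite IH cat_rcons.
Qed.

Lemma tot_safe {R : realFieldType} (Delta : R) b b' x T : b' != b ->
  totR (rk Delta (Some b)) x (nseq T (Some b')) = W R T 0.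
Proof.
move=> hb; rewrite /totR size_nseq -(big_mkord xpredT (fun i => rk Delta (Some b) x (take i.+1 (nseq T (Some b'))))).
rewrite /W big_nat_cond [RHS]big_nat_cond; apply: eq_bigr => i /andP[/andP[_ hi] _].
rewrite take_nseq //; case: i hi => [|i] hi; first by rewrite /rk.
have e : (Some b' != Some b) = true by [].
by rewrite /rk /= e.
Qed.

Lemma W0 {R : realFieldType} m : W R m.+1 0 = m%:R.
Proof.
rewrite /W big_nat_recl //= add0r.
rewrite (eq_bigr (fun _ => 1)) //; by rewrite sumr_const_nat subn0.
Qed.

Lemma cont_all {Y : Type} {X : Type} (P : pred Y) (pi : policy X Y) x ys m :
  (forall zs, P (pi x zs)) -> all P ys -> all P (cont pi x ys m).
Proof.
move=> hP; elim: m ys => [|m IH] ys hys //.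
by rewrite contSr; apply: IH; rewrite all_rcons hP hys.
Qed.

Lemma rk_trap {R : realFieldType} (Delta : R) k x s : 0 <= Delta <= 1 ->
  all (fun y => y != None) s -> head None s = k ->
  rk Delta k x s <= (1 - Delta) * ((size s == 2%N) || (size s == 3%N))%N%:R.
Proof.
case/andP=> hD0 hD1.
case: s => [|a0 [|a1 [|a2 [|a3 l]]]] /=; rewrite /rk /=; try (rewrite mulr0; done).
- case/and3P=> _ h1 _ ->. by rewrite eqxx (negbTE h1) /= mulr1.
- case/and4P=> _ h1 h2 _ ->; by rewrite eqxx (negbTE h2) /= mulr1.
move=> hall <-; rewrite eqxx /=.
have hl : last a3 l != None.
  have := mem_last a3 l; rewrite inE => /orP[/eqP ->|hm].
    by case/and5P: hall.
  by case/and5P: hall => _ _ _ _ /allP; apply.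
case/and5P: hall => _ h1 h2 _ _; by rewrite (negbTE hl) h1 h2 /= mulr0.
Qed.

Lemma V_trap {R : realFieldType} (Delta : R) k T (pi : policy unit (option bool)) x :
  0 <= Delta <= 1 -> (forall ys, pi x ys != None) -> pi x [::] = k ->
  V T (rk Delta k) pi x [::] <= (1 - Delta) * 2.
Proof.
move=> hD hpi hk; have /andP[hD0 hD1] := hD.
rewrite /V /= subn0.
case: T => [|T]; first by rewrite big_geq //; lra.
set zs := cont pi x [::] T.+1.
have hall : all (fun y => y != None) zs by apply: cont_all.
have hhead : head None zs = k.
  by rewrite /zs contSr; case: (cont_ext pi x [:: pi x [::]] T) => s [-> _] /=.
have hsz : size zs = T.+1 by rewrite /zs size_cont.
apply: (@le_trans _ _ (\sum_(0 <= i < T.+1) (1 - Delta) * ((i == 1%N) || (i == 2%N))%N%:R)).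
  rewrite big_nat_cond [X in _ <= X]big_nat_cond; apply: ler_sum => i /andP[/andP[_ hi] _].
  apply: le_trans (rk_trap _ _ _ _ hD _ _) _.
  - move/allP: hall => hall; apply/allP => y hy; apply: hall; exact: mem_take hy.
  - by move: hhead; case: (zs) => [|a l] //=.
  - by rewrite size_takel ?hsz.
have hs : \sum_(0 <= i < T.+1) ((i == 1%N) || (i == 2%N))%N%:R <= 2 :> R.
  have := sum3 (R:=R) T.+1; rewrite (@big_cat_nat _ _ _ T.+1) //=; last by lia.
  move=> e.
  have h0 : 0 <= \sum_(T.+1 <= i < T.+4) ((i == 1%N) || (i == 2%N))%N%:R :> R.
    by apply: sumr_ge0 => i _; rewrite ler0n.
  lra.
rewrite -mulr_sumr; apply: ler_wpM2l => //; lra.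
Qed.

Theorem theorem1 (R : realFieldType) (T n : nat) (Delta : R) :
  (0 < T)%N -> ~~ odd T -> (2 <= n)%N -> 0 < Delta <= 1 ->
  exists (X : Type) (x : X) (Y : finType) (pis : 'I_n -> policy X Y)
         (Rfam : reward R X Y -> Prop),
    (forall r, Rfam r -> forall (x' : X) (ys : seq Y), 0 <= r x' ys <= 1) /\
    (forall r, Rfam r ->
       (exists pistar : policy X Y, optimal T r pistar) /\
       forall pistar : policy X Y, optimal T r pistar ->
       [/\ (* 1. near-optimal path *)
           exists (eps : R) (P : T.-tuple 'I_n),
             [/\ 0 <= eps <= 1, eps <= Delta &
                 V T r pistar x [::] = VP r pis x P + eps],
           (* 2. single policy coverage *)
           forall t : nat, (t < T)%N ->
             cov_gap T r pistar pis x (cont pistar x [::] t) <= Delta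
         & (* 3. generalization coverage *)
           forall ys : seq Y, (size ys < T)%N ->
             (exists zs : seq Y, [/\ size zs = T, take (size ys) zs = ys &
                 V T r pistar x [::] - Delta <= totR r x zs]) ->
             cov_gap T r pistar pis x ys <= Delta]) /\
    (forall A : obs R X Y -> 'I_n,
       exists r, Rfam r /\
         forall pistar : policy X Y, optimal T r pistar ->
           V T r (alg_policy pis A T r pistar) x [::]
             < V T r pistar x [::] - T%:R / 2 + 2).
Proof.
move=> hT0 hev hn /andP[hD0' hD1].
have hD0 : 0 <= Delta := ltW hD0'.
have hD : 0 <= Delta <= 1 by rewrite hD0 hD1.
pose j0 : 'I_n := Ordinal (ltnW hn).
pose j1 : 'I_n := Ordinal hn.
exists unit, tt, (option bool), (@pisE n), (fun r => exists b, r = rk Delta (Some b)).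
split; [|split].
- move=> r [b ->] x' ys; rewrite rk_ge0 //=.
  apply: le_trans (rk_le _ _ _ _ hD0) _.
  by case: (1 < size ys)%N => /=; [exact: lexx | exact: ler01].
- move=> r [b ->]; split; first by exists pic; apply: opt_pic.
  move=> ps hopt.
  have cov3 : forall ys, (size ys < T)%N ->
      (exists zs, [/\ size zs = T, take (size ys) zs = ys &
         V T (rk Delta (Some b)) ps tt [::] - Delta <= totR (rk Delta (Some b)) tt zs]) ->
      cov_gap T (rk Delta (Some b)) ps (@pisE n) tt ys <= Delta.
    move=> ys hys [zs [hsz htk hge]]; apply: (@cov _ Delta _ _ _ _ j0) => //.
    apply/negP => hb; have := bad_tot Delta (Some b) tt _ _ _ hD hb hsz htk.
    move: hge; rewrite (opt_V _ _ _ _ _ _ hD0 hopt) /=; lra.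
  split.
  + exists 0, (nseq_tuple T (if b then j1 else j0)); split.
    * by rewrite lexx ler01.
    * exact: hD0.
    rewrite addr0 (opt_V _ _ _ _ _ _ hD0 hopt) /VP /route_resp /= route_nseq /=.
    rewrite tot_safe //; by move: (b) => [] /=.
  + move=> t ht; apply: cov3; first by rewrite size_cont.
    exists (cont ps tt [::] T); split.
    * by rewrite size_cont.
    * by have := take_cont ps tt [::] _ _ (ltnW ht); rewrite size_cont /= add0n.
    have e : V T (rk Delta (Some b)) ps tt [::] = totR (rk Delta (Some b)) tt (cont ps tt [::] T).
      rewrite /V /totR /= subn0.
      rewrite -(big_mkord xpredT (fun i => rk Delta (Some b) tt (take i.+1 (cont ps tt [::] T)))).
      by rewrite size_cont.
    rewrite e; lra.
  + exact: cov3.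
- move=> A.
  pose obs0 : obs R unit (option bool) := Obs tt [::] [::] (fun _ : option bool => W R T 1).
  pose i0 := A obs0.
  exists (rk Delta (Some (val i0 == 0%N))); split; first by exists (val i0 == 0%N).
  move=> ps hopt.
  have hobs : observe T (rk Delta (Some (val i0 == 0%N))) ps tt [::] = obs0.
    rewrite /observe /obs0 /=; congr Obs; apply: functional_extensionality => y.
    by rewrite Q_opt //= /rk /= add0r.
  have hV := V_trap Delta (Some (val i0 == 0%N)) T
    (alg_policy (@pisE n) A T (rk Delta (Some (val i0 == 0%N))) ps) tt hD
    (fun ys => erefl true) _.
  move: hV; rewrite {1}/alg_policy hobs => /(_ erefl) hV.
  rewrite (opt_V _ _ _ _ _ _ hD0 hopt) /=.
  have [m hm] : exists m, T = m.+1 by exists T.-1; lia.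
  case: m hm => [|m] hm; first by rewrite hm in hev.
  move: hV; rewrite hm W0 => hV.
  have e1 : (m.+1)%:R = m%:R + 1 :> R by rewrite -addn1 natrD.
  have e2 : (m.+2)%:R = m%:R + 2 :> R by rewrite -addn2 natrD.
  have h0 : 0 <= m%:R :> R by rewrite ler0n.
  rewrite e1 e2 in hV *; lra.
Qed.
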